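(* Let $\chi \in \mathbb{F}_{p^2}^\times$ such that $|\chi| \not\in \{1, 2\}$ and $|\chi| \in \mathcal{D}(p \pm 1)$. Then exactly one of $\iota_{p \pm 1}(\chi)$ or $\iota_{p \pm 1}(\chi^{-1})$ is in the lower half.
   Context: Let $p$ be an odd prime; $|\cdot|$ denotes multiplicative order in $\mathbb{F}_{p^2}^\times$, $\mathcal{D}(n)$ is the set of positive divisors of $n$, and $\mathcal{D}(p \pm 1) = \mathcal{D}(p-1) \cup \mathcal{D}(p+1)$. Write $p - 1 = p_1^{t_1} \cdots p_n^{t_n}$ with $p_1 = 2$. Fix a $\mathbb{Z}$-basis $\{g_i\}_{i=1}^n$ of $\mathbb{F}_p^\times$ with $|g_i| = p_i^{t_i}$; this gives a group isomorphism $\iota_{p-1} : \mathbb{F}_p^\times \to \bigoplus_{i=1}^n \mathbb{Z}/p_i^{t_i}\mathbb{Z}$, $\prod_{i} g_i^{r_i} \mapsto (r_1, \ldots, r_n)$. The identical construction, with $p+1 = q_1^{s_1}\cdots q_m^{s_m}$ ($q_1 = 2$) and the subgroup $E \subset \mathbb{F}_{p^2}^\times$ of order $p+1$ in place of $\mathbb{F}_p^\times$, gives $\iota_{p+1} : E \to \bigoplus_i \mathbb{Z}/q_i^{s_i}\mathbb{Z}$; $\iota_{p\pm1}$ means $\iota_{p-1}$ when $\chi \in \mathbb{F}_p^\times$ and $\iota_{p+1}$ when $\chi \in E$. Definition (lower half): with $p \pm 1 = p_1^{t_1}\cdots p_n^{t_n}$, $p_1 = 2$, let $(r_1, \ldots,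 r_n) \in \bigoplus_{i} \mathbb{Z}/p_i^{t_i}\mathbb{Z}$ be an integer array (via the isomorphism above) not representing an element of order $1$ or $2$, and let $k = \min\{j : r_j \neq 0 \text{ and } (p_j, r_j) \neq (2, 2^{t_1 - 1})\}$. The array is in the lower half if $r_k \leq p_k^{t_k}/2$. *)

(* Defs.v *)
From HB Require Import structures.
From mathcomp Require Import all_boot all_order all_algebra all_fingroup.
Set Implicit Arguments. Unset Strict Implicit. Unset Printing Implicit Defensive.
Import GRing.Theory.

(* The units of the prime subfield F_p of a finite field F of characteristic p,
   viewed inside the unit group F^x = {unit F}. *)
Definition Fp_units (F : finFieldType) (p : nat) : {set {unit F}} :=
  [set u : {unit F} | [exists m : 'I_p, val u == (m%:R : F)%R]].

Definition coords (gT : finGroupType) (n : nat) (ps ts : 'I_n.+1 -> nat)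
  (gs : 'I_n.+1 -> gT) (r : {ffun 'I_n.+1 -> nat}) (x : gT) : Prop :=
  (forall i, r i < ps i ^ ts i) /\ x = (\prod_(i < n.+1) gs i ^+ r i)%g.

Definition ZBasis (gT : finGroupType) (H : {set gT}) (N n : nat)
  (ps ts : 'I_n.+1 -> nat) (gs : 'I_n.+1 -> gT) : Prop :=
  [/\ (forall i, prime (ps i)) /\ injective ps, ps ord0 = 2,
      (forall i, 0 < ts i) /\
      N = (\prod_(i < n.+1) ps i ^ ts i),
      (forall i, gs i \in H /\ #[gs i]%g = ps i ^ ts i) &
      (forall x, x \in H -> exists! r, coords ps ts gs r x)].

Definition qualifies (n : nat) (ps ts : 'I_n.+1 -> nat)
  (r : {ffun 'I_n.+1 -> nat}) (j : 'I_n.+1) : bool :=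
  (r j != 0) && ((ps j, r j) != (2, 2 ^ (ts ord0).-1)).

(* lower half: with k the least qualifying index, r_k <= p_k^{t_k}/2
   (written 2 * r_k <= p_k^{t_k} to avoid truncating division). *)
Definition lower_half (n : nat) (ps ts : 'I_n.+1 -> nat)
  (r : {ffun 'I_n.+1 -> nat}) : bool :=
  [exists k : 'I_n.+1,
     [&& qualifies ps ts r k,
         [forall j : 'I_n.+1, (j < k)%N ==> ~~ qualifies ps ts r j] &
         2 * r k <= ps k ^ ts k]].

(* Main.v *)
Require Import Defs.
From mathcomp Require Import all_boot all_order all_algebra all_fingroup all_solvable all_field.
From mathcomp Require Import zify.
Set Implicit Arguments. Unset Strict Implicit. Unset Printing Implicit Defensive.
Import GRing.Theory.
Local Notation val_unitX := FinRing.val_unitX.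
Local Notation val_unitM := FinRing.val_unitM.
Local Notation val_unit1 := FinRing.val_unit1.

Section Main.
Variable F : finFieldType.

Lemma val_prod (I : finType) (f : I -> {unit F}) :
  val (\prod_(i : I) f i)%g = (\prod_(i : I) val (f i))%R.
Proof. by apply: (big_morph val) => //; exact: val_unitM. Qed.

Lemma aux_mod a b m : a < m -> b < m -> (a + b) %% m = 0 ->
  b = if a == 0 then 0 else m - a.
Proof.
move=> am bm /eqP h; have : m %| a + b by [].
case/dvdnP => k hk.
have k2 : k < 2.
  rewrite ltnNge; apply/negP => k2; have := leq_mul k2 (leqnn m); lia.
case: k k2 hk => [|[|]] // _ hk; case: eqP; lia.
Qed.

Lemma xor_half (H : {set {unit F}}) N n ps ts gs (chi : {unit F}) r r' :
  (1%g \in H) -> @ZBasis _ H N n ps ts gs -> #[chi]%g != 1 -> #[chi]%g != 2 ->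
  coords ps ts gs r chi -> coords ps ts gs r' (chi^-1)%g ->
  lower_half ps ts r (+) lower_half ps ts r'.
Proof.
move=> H1 [[pr inj] p0 [tpos _] go uniqc] h1 h2 [rlt chiE] [r'lt chiVE].
have mpos : forall i, 0 < ps i ^ ts i by move=> i; rewrite expn_gt0 prime_gt0.
have ordg : forall i, (val (gs i) ^+ (ps i ^ ts i) = 1)%R.
  by move=> i; rewrite -val_unitX -(proj2 (go i)) expg_order.
have c0 : coords ps ts gs [ffun _ => 0] 1%g.
  by split; [move=> i; rewrite ffunE | rewrite big1 // => i _; rewrite ffunE expg0].
have c1 : coords ps ts gs [ffun i => (r i + r' i) %% (ps i ^ ts i)] 1%g.
  split; first by move=> i; rewrite ffunE ltn_mod.
  apply: val_inj; rewrite val_prod val_unit1.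
  have : val (chi * chi^-1)%g = 1%R by rewrite mulgV.
  rewrite val_unitM {1}chiE chiVE !val_prod -big_split /= => e; rewrite -{1}e.
  apply: eq_bigr => i _; rewrite ffunE !val_unitX -exprD.
  by rewrite {1}(divn_eq (r i + r' i) (ps i ^ ts i)) exprD mulnC exprM ordg expr1n mul1r.
have [r0 [_ U0]] := uniqc _ H1.
have hmod : forall i, (r i + r' i) %% (ps i ^ ts i) = 0.
  move=> i; have := U0 _ c1; rewrite (U0 _ c0) => /(congr1 (fun f : {ffun _ -> nat} => f i)).
  by rewrite !ffunE.
have r'E : forall i, r' i = if r i == 0 then 0 else ps i ^ ts i - r i.
  by move=> i; apply: aux_mod; rewrite ?hmod.
set c := 2 ^ (ts ord0).-1.
have m0 : ps ord0 ^ ts ord0 = 2 * c by rewrite p0 /c -expnS prednK.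
have q_eq : forall j, qualifies ps ts r' j = qualifies ps ts r j.
  move=> j; rewrite /qualifies !xpair_eqE r'E -/c.
  case: (eqVneq (ps j) 2) => [pj2|pj2] /=.
    have -> : j = ord0 by apply: inj; rewrite pj2 p0.
    rewrite m0; have := rlt ord0; rewrite m0.
    move=> h; case: (eqVneq (r ord0) 0) => [->|h0] //=.
    case: (eqVneq (r ord0) c) => [->|hc].
      have e2 : 2 * c - c = c by lia.
      by rewrite e2 eqxx andbF.
    have a : 2 * c - r ord0 != 0 by apply/eqP; lia.
    have b : 2 * c - r ord0 != c by apply/eqP; move: hc => /eqP; lia.
    by rewrite a b.
  rewrite !andbT; have := rlt j; have := mpos j.
  move=> hm hr; set x := r j in hr *; case: ifP => [_|h0] //=.
  by apply/eqP; move/negbT: h0 => /eqP; lia.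
have [j qj] : exists j, qualifies ps ts r j.
  case: (pickP (qualifies ps ts r)) => [j qj | none]; first by exists j.
  exfalso.
  have : (chi ^+ 2 = 1)%g.
    apply: val_inj; rewrite val_unitX chiE val_prod -prodrXl val_unit1.
    apply: big1 => i _; rewrite val_unitX -exprM.
    have := none i; rewrite /qualifies.
    case: (eqVneq i ord0) => [-> | ni0].
      rewrite p0 xpair_eqE eqxx /= -/c.
      case: eqP => [-> | _] /=; first by rewrite expr0.
      move/negbFE/eqP => ->; by rewrite mulnC -m0 ordg.
    have pi2 : ps i != 2.
      by apply/eqP => e; move/eqP: ni0; apply; apply: inj; by rewrite e p0.
    rewrite xpair_eqE (negbTE pi2) andbT /=.
    by move/negbFE/eqP => ->; rewrite expr0.
  move/eqP; rewrite -order_dvdn => d2.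
  have := dvdn_leq (isT : 0 < 2) d2; have := order_gt0 chi.
  move: h1 h2; case: #[chi]%g => [|[|[|]]] //.
have [k qk kmin] := arg_minnP (fun i : 'I_n.+1 => nat_of_ord i) qj.
have lh : forall s, (forall j, qualifies ps ts s j = qualifies ps ts r j) ->
    lower_half ps ts s = (2 * s k <= ps k ^ ts k).
  move=> s hs; apply/existsP/idP.
    case=> k' /and3P [qk' /forallP mk' le].
    suff -> : k = k' by [].
    apply/val_inj/eqP; rewrite eqn_leq kmin -?hs //=.
    rewrite leqNgt; apply/negP => lt; have := mk' k; rewrite lt hs qk.
    by [].
  move=> le; exists k; rewrite hs qk le andbT /=.
  apply/forallP => j'; apply/implyP => jk; rewrite hs; apply/negP => qj'.
  by have := kmin j' qj'; rewrite leqNgt jk.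
rewrite (lh r) // (lh r') // r'E.
have rk0 : r k != 0 by case/andP: qk.
rewrite (negbTE rk0).
have ne : 2 * r k != ps k ^ ts k.
  case: (eqVneq k ord0) => [ek | nk0].
    move: qk; rewrite /qualifies ek m0 p0 xpair_eqE eqxx /= -/c => /andP [_ hc].
    by apply/eqP => e; move: hc; rewrite -(eqn_pmul2l (isT : 0 < 2)) e eqxx.
  have pk2 : ps k != 2.
    by apply/eqP => e; move/eqP: nk0; apply; apply: inj; by rewrite e p0.
  have : odd (ps k ^ ts k).
    by rewrite oddX; case: (even_prime (pr k)) => [e|->]; [rewrite e eqxx in pk2 | rewrite orbT].
  by apply: contraTneq => <-; rewrite oddM.
have := rlt k; move: ne rk0.
case: (leqP (2 * r k)); case: (leqP (2 * _)) => //=; lia.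
Qed.

Lemma inFp (p : nat) (hp : prime p) (hch : (p \in [pchar F])%R) (u : {unit F}) :
  (u ^+ p.-1 = 1)%g -> u \in Fp_units F p.
Proof.
move=> hu; rewrite inE; apply: contraT => /existsPn none.
have p1 := prime_gt1 hp.
pose P : {poly F} := ('X^p - 'X)%R.
have szP : size P = p.+1.
  by rewrite /P size_addl ?size_polyXn // size_opp size_polyX.
pose rs := val u :: [seq (i%:R)%R : F | i <- iota 0 p].
have : size rs < size P.
  apply: max_poly_roots; first by rewrite -size_poly_eq0 szP.
    apply/allP => x; rewrite inE => /orP [/eqP -> | /mapP [i _ ->]];
      rewrite /root /P !hornerE subr_eq0; apply/eqP.
      by rewrite -(prednK (prime_gt0 hp)) exprS -val_unitX hu val_unit1 mulr1.
    by rewrite -(pFrobenius_autE hch) pFrobenius_aut_nat.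
  rewrite /= map_inj_in_uniq ?iota_uniq ?andbT.
    apply/mapP => [[i]]; rewrite mem_iota add0n => ip e.
    by have := none (Ordinal ip); rewrite /= e eqxx.
  move=> i j; rewrite !mem_iota !add0n => ip jp e.
  wlog ij : i j ip jp e / i <= j.
    move=> W; case: (leqP i j) => h; first exact: W.
    exact: (esym (W j i jp ip (esym e) (ltnW h))).
  have : p %| j - i by rewrite (dvdn_pcharf hch) natrB // e subrr.
  move=> d; have := dvdn_leq; case: (posnP (j - i)) => [h0|hpos]; first lia.
  by move=> /(_ _ _ hpos d); lia.
by rewrite szP /= size_map size_iota ltnn.
Qed.

Lemma inEgrp (p : nat) (E : {group {unit F}}) (hE : #|E| = p.+1) (u : {unit F}) :
  (u ^+ p.+1 = 1)%g -> u \in E.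
Proof.
move=> hu; apply: contraT => uE.
pose P : {poly F} := ('X^(p.+1) - 1)%R.
have szP : size P = p.+2 by rewrite /P size_Xn_sub_1.
pose rs := val u :: [seq val x | x <- enum E].
have : size rs < size P.
  apply: max_poly_roots; first by rewrite -size_poly_eq0 szP.
    apply/allP => x; rewrite inE => /orP [/eqP -> | /mapP [y yE ->]];
      rewrite /root /P !hornerE subr_eq0; apply/eqP.
      by rewrite -val_unitX hu.
    by rewrite -val_unitX -hE expg_cardG // -mem_enum.
  rewrite /= map_inj_uniq ?enum_uniq ?andbT; last exact: val_inj.
  by rewrite mem_map ?mem_enum //; exact: val_inj.
by rewrite szP /= size_map -cardE hE ltnn.
Qed.

End Main.

Theorem lemma9 (p : nat) (F : finFieldType) (E : {group {unit F}})
  (chi : {unit F})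
  (hp : prime p) (hodd : odd p) (hF : #|F| = p ^ 2) (hE : #|E| = p.+1)
  (h1 : #[chi]%g != 1) (h2 : #[chi]%g != 2)
  (hD : (#[chi]%g %| p.-1) || (#[chi]%g %| p.+1)) :
  (chi \in Fp_units F p \/ chi \in E) /\
  (chi \in Fp_units F p ->
     forall n (ps ts : 'I_n.+1 -> nat) (gs : 'I_n.+1 -> {unit F}),
     ZBasis (Fp_units F p) p.-1 ps ts gs ->
     forall r r', coords ps ts gs r chi -> coords ps ts gs r' (chi^-1)%g ->
     lower_half ps ts r (+) lower_half ps ts r') /\
  (chi \in E ->
     forall n (ps ts : 'I_n.+1 -> nat) (gs : 'I_n.+1 -> {unit F}),
     ZBasis E p.+1 ps ts gs ->
     forall r r', coords ps ts gs r chi -> coords ps ts gs r' (chi^-1)%g ->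
     lower_half ps ts r (+) lower_half ps ts r').
Proof.
have hch : (p \in [pchar F])%R by apply: (card_finPcharP hF hp).
split.
  case/orP: hD => d; [left; apply: inFp | right; apply: (inEgrp hE)] => //;
    by apply/eqP; rewrite -order_dvdn.
split.
  move=> _ n ps ts gs B r r' c c'; apply: (xor_half _ B h1 h2 c c').
  rewrite inE; apply/existsP; exists (Ordinal (prime_gt1 hp)).
  by apply/eqP.
move=> _ n ps ts gs B r r' c c'; apply: (xor_half _ B h1 h2 c c').
exact: group1.
Qed.
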